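(* Let $F$ be a minimally unsatisfiable clause-set with $\mathrm{singind}(F)=1$. 1. If $F$ has at least two singular variables, then: (a) every singular variable of $F$ is non-1-singular; (b) there is a clause $C\in F$ containing every singular literal of $F$; (c) if $F$ is eventually saturated, then $F$ has exactly two singular variables. 2. If $F$ is eventually saturated, then any two elements of $\mathrm{sDP}(F)$ are isomorphic.
   Context: Literals are variables $v$ and complements $\overline{v}$; a clause is a finite set of literals with no complementary pair; a clause-set is a finite set of clauses; $\mathrm{var}(F)$ is the set of variables of $F$; $\mathrm{ldeg}_F(x)$ is the number of clauses of $F$ containing literal $x$. $\mathrm{DP}_v(F) := \{C \in F : v \notin \mathrm{var}(C)\} \cup \{(C \cup D)\setminus\{v,\overline{v}\} : C, D \in F,\ C \cap \overline{D} = \{v\}\}$; $\mathrm{DP}_{v_1,\dots,v_k}(F)$ applies these in order. A variable $v$ is singular for $F$ if $\min(\mathrm{ldeg}_F(v),\mathrm{ldeg}_F(\overline{v}))=1$; 1-singular if $\mathrm{ldeg}_F(v)=\mathrm{ldeg}_F(\overline{v})=1$; non-1-singular if singular but not 1-singular; a singular literal is a literal $x$ of a singular variable with $\mathrm{ldeg}_F(x)=1$; $F$ is nonsingular if it has no singular variables. For minimally unsatisfiable $F$, a tuple $(v_1,\dots,v_n)$ is singular if each $v_i$ is singular for $\mathrm{DP}_{v_1,\dots,v_{i-1}}(F)$, and maximal if $\mathrm{DP}_{v_1,\dots,v_n}(F)$ is nonsingular; $\mathrm{singind}(F)$ is the minimal length of a maximal singular tuple. $\mathrm{sDP}(F)$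 is the set of nonsingular minimally unsatisfiable clause-sets obtainable from $F$ by zero or more steps $G\leadsto\mathrm{DP}_v(G)$ with $v$ singular for $G$. A minimally unsatisfiable $G$ is saturated if for every $C\in G$ and literal $y$ with $\mathrm{var}(y)\in\mathrm{var}(G)\setminus\mathrm{var}(C)$, $(G\setminus\{C\})\cup\{C\cup\{y\}\}$ is satisfiable; $F$ is eventually saturated if every element of $\mathrm{sDP}(F)$ is saturated. Clause-sets are isomorphic if a complement-preserving bijection on literals maps the clauses of one exactly onto the clauses of the other. *)

(* Defs.v *)
From HB Require Import structures.
From mathcomp Require Import all_boot all_order.
From mathcomp Require Import finmap.
Set Implicit Arguments. Unset Strict Implicit. Unset Printing Implicit Defensive.
Local Open Scope fset_scope.

(* Variables are natural numbers; a literal is a pair (v, b):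
   (v, true) is the positive literal v, (v, false) is its complement. *)
Definition lit := (nat * bool)%type.
Definition comp (x : lit) : lit := (x.1, ~~ x.2).
Definition pos (v : nat) : lit := (v, true).
Definition neg (v : nat) : lit := (v, false).

Definition clause := {fset lit}.
Definition clauseset := {fset clause}.

Definition clause_ok (C : clause) : Prop := forall x, x \in C -> comp x \notin C.
Definition clauseset_ok (F : clauseset) : Prop := forall C, C \in F -> clause_ok C.

Definition varC (C : clause) : {fset nat} := [fset x.1 | x in C].
Definition varF (F : clauseset) : {fset nat} := \bigcup_(C <- F) varC C.

Definition ldeg (F : clauseset) (x : lit) : nat := #|` [fset C in F | x \in C] |.

Definition DP (v : nat) (F : clauseset) : clauseset :=
  [fset C in F | v \notin varC C] `|`
  [fset (C `|` D) `\` [fset pos v; neg v] | C in F, D in F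
     & C `&` [fset comp y | y in D] == [fset pos v]].

Definition DPs (vs : seq nat) (F : clauseset) : clauseset :=
  foldl (fun G v => DP v G) F vs.

Definition sat_lit (f : nat -> bool) (x : lit) : bool := f x.1 == x.2.
Definition satisfiable (F : clauseset) : Prop :=
  exists f : nat -> bool, forall C, C \in F -> exists2 x, x \in C & sat_lit f x.

Definition MU (F : clauseset) : Prop :=
  clauseset_ok F /\ ~ satisfiable F /\ (forall G, G `<` F -> satisfiable G).

Definition singular (F : clauseset) (v : nat) : Prop :=
  minn (ldeg F (pos v)) (ldeg F (neg v)) = 1.
Definition one_singular (F : clauseset) (v : nat) : Prop :=
  ldeg F (pos v) = 1 /\ ldeg F (neg v) = 1.
Definition non_one_singular (F : clauseset) (v : nat) : Prop :=
  singular F v /\ ~ one_singular F v.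
Definition singular_lit (F : clauseset) (x : lit) : Prop :=
  singular F x.1 /\ ldeg F x = 1.
Definition nonsingular (F : clauseset) : Prop := forall v, ~ singular F v.

Definition singular_tuple (F : clauseset) (vs : seq nat) : Prop :=
  forall i, i < size vs -> singular (DPs (take i vs) F) (nth 0 vs i).
Definition maximal_singular_tuple (F : clauseset) (vs : seq nat) : Prop :=
  singular_tuple F vs /\ nonsingular (DPs vs F).

Definition singind_eq (F : clauseset) (n : nat) : Prop :=
  (exists vs, maximal_singular_tuple F vs /\ size vs = n) /\
  (forall vs, maximal_singular_tuple F vs -> n <= size vs).

Inductive sDP_reach (F : clauseset) : clauseset -> Prop :=
| sDP_refl : sDP_reach F F
| sDP_step G v : sDP_reach F G -> singular G v -> sDP_reach F (DP v G).

Definition in_sDP (F G : clauseset) : Prop :=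
  sDP_reach F G /\ nonsingular G /\ MU G.

Definition saturated (G : clauseset) : Prop :=
  MU G /\
  forall C y, C \in G -> y.1 \in varF G -> y.1 \notin varC C ->
    satisfiable ((G `\ C) `|` [fset C `|` [fset y]]).

Definition eventually_saturated (F : clauseset) : Prop :=
  forall G, in_sDP F G -> saturated G.

Definition isomorphic (F G : clauseset) : Prop :=
  exists f : lit -> lit, bijective f /\ (forall x, f (comp x) = comp (f x)) /\
    [fset (f @` (C : clause)) | C in F] = G.

(* Main.v *)
Require Import Defs.
From mathcomp Require Import all_boot all_order.
From mathcomp Require Import finmap.
From mathcomp Require Import zify.
From Stdlib Require Import Classical.
Import Defs.
Set Implicit Arguments. Unset Strict Implicit. Unset Printing Implicit Defensive.
Local Open Scope fset_scope.

Lemma compK x : comp (comp x) = x.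
Proof. by case: x => u b; rewrite /comp /= negbK. Qed.
Lemma comp_inj : injective comp.
Proof. exact: can_inj compK. Qed.
Lemma comp_neq x : comp x != x.
Proof. case: x => u b; rewrite /comp /= xpair_eqE eqxx /=; by case: b. Qed.
Lemma comp1 x : (comp x).1 = x.1.
Proof. by []. Qed.
Lemma sat_comp f x : sat_lit f (comp x) = ~~ sat_lit f x.
Proof. by rewrite /sat_lit /comp /=; case: (f x.1); case: x.2. Qed.

Lemma varCP u C : reflect (exists2 x, x \in C & x.1 = u) (u \in varC C).
Proof.
apply: (iffP idP).
  by move=> /imfsetP [x /= xC ->]; exists x.
by move=> [x xC <-]; apply/imfsetP; exists x.
Qed.

Lemma mem_varC x C : x \in C -> x.1 \in varC C.
Proof. by move=> xC; apply/varCP; exists x. Qed.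

Lemma lit_eq1 x y : x.1 = y.1 -> y = x \/ y = comp x.
Proof.
case: x y => u b [u' b'] /= ->; case: b; case: b'; rewrite /comp /=; auto.
Qed.

Lemma in_compset l (D : clause) : (l \in [fset comp y | y in D]) = (comp l \in D).
Proof.
apply/imfsetP/idP => [[y /= yD ->]|H]; first by rewrite compK.
by exists (comp l); rewrite ?compK.
Qed.

Lemma in_filt (F : clauseset) (P : pred clause) C :
  (C \in [fset D in F | P D]) = (C \in F) && P C.
Proof. by rewrite !inE. Qed.

Definition cond (C D : clause) x :=
  x \in C /\ comp x \in D /\ forall l, l \in C -> comp l \in D -> l = x.

Lemma condP (C D : clause) x :
  reflect (cond C D x) (C `&` [fset comp y | y in D] == [fset x]).
Proof.
apply: (iffP eqP) => [H|[xC [cxD H]]].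
  have : x \in C `&` [fset comp y | y in D] by rewrite H in_fset1.
  rewrite in_fsetI in_compset => /andP [xC cxD]; split; [by []|split; first by []].
  move=> l lC clD.
  have : l \in C `&` [fset comp y | y in D] by rewrite in_fsetI in_compset lC clD.
  by rewrite H in_fset1 => /eqP.
apply/fsetP => l; rewrite in_fsetI in_compset in_fset1.
apply/andP/eqP => [[lC clD]|->]; first exact: H.
by [].
Qed.

Lemma condS C D x : cond C D x -> cond D C (comp x).
Proof.
move=> [xC [cxD H]]; split; first by [].
split; first by rewrite compK.
move=> l lD clC. rewrite -(compK l); congr comp; apply: H => //; by rewrite compK.
Qed.

Lemma fset2C (a b : lit) : [fset a; b] = [fset b; a].
Proof. by apply/fsetP => l; rewrite !in_fset2 orbC. Qed.

Lemma posneg x : [fset pos x.1; neg x.1] = [fset x; comp x] /\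
  (x = pos x.1 \/ x = neg x.1).
Proof. case: x => u [] /=; rewrite /pos /neg /comp //=; split; auto; exact: fset2C. Qed.

Lemma in_DP (F : clauseset) x Z :
  Z \in DP x.1 F <-> (Z \in F /\ x.1 \notin varC Z) \/
    exists C D, [/\ C \in F, D \in F, cond C D x &
                  Z = (C `|` D) `\` [fset x; comp x]].
Proof.
have [Epn Ex] := posneg x.
rewrite /DP in_fsetU in_filt; split.
  case/orP => [/andP [ZF nZ]|]; first by left.
  move/imfset2P => [C CF [D /= DP ->]].
  right. move: DP; rewrite !inE => /andP [DF /condP cd].
  rewrite Epn.
  case: Ex => Ex.
    by exists C, D; split => //; move: cd; rewrite -Ex.
  exists D, C; split => //.
    have h := condS cd; have e : comp (pos x.1) = x by rewrite {2}Ex.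
    by rewrite e in h.
  by rewrite fsetUC.
case => [[ZF nZ]|[C [D [CF DF cd ->]]]]; first by rewrite ZF nZ.
apply/orP; right; apply/imfset2P.
rewrite -Epn.
case: Ex => Ex.
  exists C => //; exists D; last by [].
  by rewrite !inE DF /=; apply/condP; move: cd; rewrite {1}Ex.
exists D => //; exists C; last by rewrite fsetUC.
rewrite !inE CF /=; apply/condP.
have -> : pos x.1 = comp x by rewrite {2}Ex.
exact: condS.
Qed.

Definition satC (f : nat -> bool) (C : clause) := exists2 l, l \in C & sat_lit f l.

Definition upd (f : nat -> bool) u b := fun u' => if u' == u then b else f u'.
Lemma sat_upd f u b l :
  sat_lit (upd f u b) l = if l.1 == u then b == l.2 else sat_lit f l.
Proof. by rewrite /sat_lit /upd; case: (l.1 == u). Qed.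

Lemma MU_drop F Z : MU F -> Z \in F ->
  exists f, (forall C, C \in F -> C != Z -> satC f C) /\ ~ satC f Z.
Proof.
move=> [ok [uns min]] ZF.
have [f Hf] := min _ (fproperD1 ZF).
exists f; split.
  by move=> C CF CZ; apply: Hf; rewrite in_fsetD1 CZ CF.
move=> sZ; apply: uns; exists f => C CF.
case: (eqVneq C Z) => [->|CZ]; first exact: sZ.
by apply: Hf; rewrite in_fsetD1 CZ CF.
Qed.

Lemma MU_ok F C l : MU F -> C \in F -> l \in C -> comp l \notin C.
Proof. by move=> [ok _] CF; apply: ok. Qed.

Definition setup F x C0 :=
  [/\ MU F, C0 \in F, x \in C0 & forall C, C \in F -> x \in C -> C = C0].

Lemma setup_of F x : MU F -> ldeg F x = 1 -> exists C0, setup F x C0.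
Proof.
move=> mu /eqP /cardfs1P [C0 E].
have : C0 \in [fset C in F | x \in C] by rewrite E in_fset1.
rewrite in_filt => /andP [C0F xC0].
exists C0; split => // C CF xC.
have : C \in [fset C in F | x \in C] by rewrite in_filt CF xC.
by rewrite E in_fset1 => /eqP.
Qed.

Lemma neq_var_lit x l : l != x -> l != comp x -> l.1 != x.1.
Proof.
move=> h1 h2; apply/eqP => e; case: (lit_eq1 (esym e)) => ex.
  by rewrite ex eqxx in h1.
by rewrite ex eqxx in h2.
Qed.

Lemma var_lit_neq x l : l.1 != x.1 -> l != x /\ l != comp x.
Proof.
by move=> h; split; apply/eqP => e; move: h; rewrite e ?comp1 eqxx.
Qed.

Lemma KS F x C0 D f : setup F x C0 -> D \in F -> comp x \in D ->
  (forall C, C \in F -> C != D -> satC f C) -> ~ satC f D ->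
  sat_lit f x /\ forall l, l \in C0 -> l != x -> ~~ sat_lit f l.
Proof.
move=> [mu C0F xC0 uniq] DF cxD sat nD.
have sx : sat_lit f x.
  apply/negPn/negP => h; apply: nD; exists (comp x) => //; by rewrite sat_comp.
split => // l lC0 lx; apply/negP => sl.
have cxC0 : comp x \notin C0 by apply: MU_ok mu C0F xC0.
have [_ [uns _]] := mu; apply: uns.
exists (upd f x.1 (~~ x.2)) => C CF.
case cxC: (comp x \in C).
  by exists (comp x) => //; rewrite sat_upd /= eqxx.
case: (eqVneq C C0) => [->|CC0].
  exists l => //; rewrite sat_upd.
  have lcx : l != comp x by apply/eqP => e; rewrite -e lC0 in cxC0.
  by rewrite (negbTE (neq_var_lit lx lcx)).
have CD : C != D by apply/eqP => e; rewrite e cxD in cxC.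
have [l' l'C sl'] := sat C CF CD.
exists l' => //; rewrite sat_upd.
have l'x : l' != x by apply/eqP => e; rewrite e in l'C; rewrite (uniq C CF l'C) eqxx in CC0.
have l'cx : l' != comp x by apply/eqP => e; rewrite e cxC in l'C.
by rewrite (negbTE (neq_var_lit l'x l'cx)).
Qed.

Lemma K1 F x C0 D : setup F x C0 -> D \in F -> comp x \in D ->
  forall l, l \in C0 -> comp l \in D -> l = x.
Proof.
move=> su DF cxD l lC0 clD.
have [mu _ _ _] := su.
have [f [sat nD]] := MU_drop mu DF.
have [sx nl] := KS su DF cxD sat nD.
apply/eqP/negPn/negP => lx.
have := nl _ lC0 lx => nsl.
apply: nD; exists (comp l) => //; by rewrite sat_comp.
Qed.

Definition rho x (C0 D : clause) : clause :=
  if comp x \in D then (C0 `|` D) `\` [fset x; comp x] else D.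

Lemma in_res x (C0 D : clause) l :
  (l \in (C0 `|` D) `\` [fset x; comp x]) = [&& l != x, l != comp x & (l \in C0) || (l \in D)].
Proof. by rewrite !inE negb_or -andbA. Qed.

Lemma rho_sat F x C0 D0 D f : setup F x C0 -> D0 \in F -> D0 != C0 ->
  (forall C, C \in F -> C != D0 -> satC f C) ->
  D \in F -> D != C0 -> D != D0 -> satC f (rho x C0 D).
Proof.
move=> [mu C0F xC0 uniq] D0F D0C0 sat DF DC0 DD0.
have [l lD sl] := sat D DF DD0.
rewrite /rho; case cxD: (comp x \in D); last by exists l.
have xD : x \notin D by rewrite -[x]compK; apply: MU_ok mu DF cxD.
case: (eqVneq l (comp x)) => [elx|lcx].
  have C0D0 : C0 != D0 by rewrite eq_sym.
  have [l' l'C0 sl'] := sat C0 C0F C0D0.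
  exists l' => //; rewrite in_res l'C0 orTb andbT.
  apply/andP; split.
    by apply/eqP => e; move: sl sl'; rewrite elx e sat_comp => /negP.
  by apply/eqP => e; move: (MU_ok mu C0F xC0); rewrite -e l'C0.
exists l => //; rewrite in_res lD orbT andbT; apply/andP; split => //.
by apply/eqP => e; rewrite -e lD in xD.
Qed.

Lemma rho_unsat F x C0 D0 f : setup F x C0 -> D0 \in F ->
  (forall C, C \in F -> C != D0 -> satC f C) -> ~ satC f D0 ->
  ~ satC f (rho x C0 D0).
Proof.
move=> su D0F sat nD; rewrite /rho; case cxD: (comp x \in D0) => //.
have [sx nl] := KS su D0F cxD sat nD.
move=> [l]; rewrite in_res => /and3P [lx lcx /orP [lC0|lD]] sl.
  by move: (nl _ lC0 lx); rewrite sl.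
by apply: nD; exists l.
Qed.

Lemma rho_inj F x C0 : setup F x C0 -> {in F `\ C0 &, injective (rho x C0)}.
Proof.
move=> su D1 D2; rewrite !in_fsetD1 => /andP [D1C0 D1F] /andP [D2C0 D2F] e.
apply/eqP/negPn/negP => D12.
have [mu _ _ _] := su.
have [f [sat nD]] := MU_drop mu D1F.
apply: (rho_unsat su D1F sat nD); rewrite e.
apply: (rho_sat su D1F D1C0 sat D2F D2C0); by rewrite eq_sym.
Qed.

Lemma DPchar F x C0 : setup F x C0 ->
  DP x.1 F = [fset rho x C0 D | D in F `\ C0].
Proof.
move=> su; have [mu C0F xC0 uniq] := su.
have cxC0 : comp x \notin C0 by apply: MU_ok mu C0F xC0.
apply/fsetP => Z; apply/idP/idP.
  move/in_DP => [[ZF nZ]|[C [D [CF DF [xC [cxD _]] ->]]]].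
    apply/imfsetP; exists Z.
      rewrite /= in_fsetD1 ZF andbT; apply/eqP => e; move: nZ.
      by rewrite e (mem_varC xC0).
    rewrite /rho; case cxZ: (comp x \in Z) => //.
    by move: nZ; rewrite -(comp1 x) (mem_varC cxZ).
  apply/imfsetP; exists D.
    rewrite /= in_fsetD1 DF andbT; apply/eqP => e; by rewrite -e cxD in cxC0.
  by rewrite /rho cxD (uniq C CF xC).
move/imfsetP => [D /=]; rewrite in_fsetD1 => /andP [DC0 DF] ->.
apply/in_DP; rewrite /rho; case cxD: (comp x \in D).
  right; exists C0, D; split => //; split => //; split => //.
  exact: K1 su DF cxD.
left; split => //; apply/negP => /varCP [l lD el].
case: (lit_eq1 (esym el)) => e; first by rewrite e in lD; rewrite (uniq D DF lD) eqxx in DC0.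
by move: lD; rewrite e cxD.
Qed.

Lemma MU_DP F x C0 : setup F x C0 -> MU (DP x.1 F).
Proof.
move=> su; have [mu C0F xC0 uniq] := su.
have [ok [uns min]] := mu.
have cxC0 : comp x \notin C0 by apply: MU_ok mu C0F xC0.
have Hl : forall l, l \in C0 -> l != comp x.
  by move=> l lC0; apply/eqP => e; rewrite -e lC0 in cxC0.
have Hx : forall C l, C \in F -> C != C0 -> l \in C -> l != x.
  by move=> C l CF CC0 lC; apply/eqP => e; rewrite e in lC; rewrite (uniq C CF lC) eqxx in CC0.
rewrite (DPchar su); split; [|split].
- move=> Z /imfsetP [D /=]; rewrite in_fsetD1 => /andP [DC0 DF] -> l.
  rewrite /rho; case cxD: (comp x \in D); last by apply: ok.
  rewrite !in_res => /and3P [lx lcx /orP [lC0|lD]]; apply/negP => /and3P [clx clcx /orP [clC0|clD]].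
  + by move: (ok _ C0F _ lC0); rewrite clC0.
  + by move: lx; rewrite (K1 su DF cxD lC0 clD) eqxx.
  + have := K1 su DF cxD clC0; rewrite compK => /(_ lD) e.
    by move: lcx; rewrite -e compK eqxx.
  + by move: (ok _ DF _ lD); rewrite clD.
- move=> [g sg]; apply: uns.
  have sgD : forall D, D \in F -> D != C0 -> satC g (rho x C0 D).
    by move=> D DF DC0; apply: sg; apply/imfsetP; exists D => //=; rewrite in_fsetD1 DC0 DF.
  case: (classic (exists2 l, l \in C0 & (l != x) && sat_lit g l)).
  + move=> [l lC0 /andP [lx sl]]; exists (upd g x.1 (~~ x.2)) => C CF.
    case cxC: (comp x \in C).
      by exists (comp x) => //; rewrite sat_upd /= eqxx.
    case: (eqVneq C C0) => [->|CC0].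
      by exists l => //; rewrite sat_upd (negbTE (neq_var_lit lx (Hl _ lC0))).
    have := sgD C CF CC0; rewrite /rho cxC => -[l' l'C sl'].
    exists l' => //; rewrite sat_upd.
    have l'cx : l' != comp x by apply/eqP => e; rewrite -e l'C in cxC.
    by rewrite (negbTE (neq_var_lit (Hx _ _ CF CC0 l'C) l'cx)).
  + move=> nex; exists (upd g x.1 x.2) => C CF.
    case: (eqVneq C C0) => [->|CC0].
      by exists x => //; rewrite sat_upd !eqxx.
    have [l' l'C sl'] := sgD C CF CC0; move: l'C; rewrite /rho.
    case cxC: (comp x \in C).
      rewrite in_res => /and3P [l'x l'cx /orP [l'C0|l'C]].
        by exfalso; apply: nex; exists l' => //; rewrite l'x.
      by exists l' => //; rewrite sat_upd (negbTE (neq_var_lit l'x l'cx)).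
    move=> l'C; exists l' => //; rewrite sat_upd.
    have l'cx : l' != comp x by apply/eqP => e; rewrite -e l'C in cxC.
    by rewrite (negbTE (neq_var_lit (Hx _ _ CF CC0 l'C) l'cx)).
- move=> G; rewrite fproperE => /andP [GH /fsubsetPn [Z ZH ZG]].
  move: (ZH) => /imfsetP [D0 /=]; rewrite in_fsetD1 => /andP [D0C0 D0F] EZ.
  have [f [sat nD]] := MU_drop mu D0F.
  exists f => C CG.
  move: (fsubsetP GH C CG) => /imfsetP [D /=]; rewrite in_fsetD1 => /andP [DC0 DF] EC.
  rewrite EC; apply: (rho_sat su D0F D0C0 sat DF DC0).
  by apply/eqP => e; move: CG; rewrite EC e -EZ (negbTE ZG).
Qed.

Lemma rho_mem x C0 D z : z.1 != x.1 ->
  (z \in rho x C0 D) = (z \in D) || ((comp x \in D) && (z \in C0)).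
Proof.
move=> zx; have [zx1 zx2] := var_lit_neq zx.
rewrite /rho; case: (comp x \in D); rewrite ?in_res ?zx1 ?zx2 /= ?orbF //.
by rewrite orbC.
Qed.

Lemma ldeg_DP F x C0 z : setup F x C0 -> z.1 != x.1 ->
  ldeg (DP x.1 F) z =
  #|` [fset D in F `\ C0 | (z \in D) || ((comp x \in D) && (z \in C0))] |.
Proof.
move=> su zx; rewrite /ldeg (DPchar su).
have -> : [fset C in [fset rho x C0 D | D in F `\ C0] | z \in C] =
          rho x C0 @` [fset D in F `\ C0 | z \in rho x C0 D].
  apply/fsetP => Z; rewrite in_filt; apply/andP/imfsetP.
    move=> [/imfsetP [D DS ->] zZ]; exists D => //=; rewrite in_filt zZ andbT.
    by [].
  move=> [D /=]; rewrite in_filt => /andP [DS zD] ->; split => //.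
  by apply/imfsetP; exists D.
have /card_in_imfsetP/eqP -> : {in [fset D in F `\ C0 | z \in rho x C0 D] &, injective (rho x C0)}.
  move=> D1 D2; rewrite !in_filt => /andP [D1S _] /andP [D2S _].
  exact: (rho_inj su).
congr (#|` _|); apply/fsetP => D; by rewrite !in_filt rho_mem.
Qed.

Lemma ldeg_DP0 F x C0 z : setup F x C0 -> z.1 = x.1 -> ldeg (DP x.1 F) z = 0.
Proof.
move=> su zx; have [mu C0F xC0 uniq] := su.
apply/eqP; rewrite cardfs_eq0; apply/eqP/fsetP => Z; rewrite in_filt in_fset0.
apply/negP => /andP []; rewrite (DPchar su) => /imfsetP [D /=].
rewrite in_fsetD1 => /andP [DC0 DF] ->.
rewrite /rho; case cxD: (comp x \in D).
  rewrite in_res => /and3P [zx1 zx2 _].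
  by case: (lit_eq1 (esym zx)) => e; [rewrite e eqxx in zx1|rewrite e eqxx in zx2].
case: (lit_eq1 (esym zx)) => -> xD; last by rewrite xD in cxD.
by rewrite (uniq D DF xD) eqxx in DC0.
Qed.

Lemma ldeg_posP (F : clauseset) z : reflect (exists2 C, C \in F & z \in C) (0 < ldeg F z)%N.
Proof.
rewrite /ldeg cardfs_gt0; apply: (iffP (fset0Pn _)).
  by move=> [C]; rewrite in_filt => /andP [CF zC]; exists C.
by move=> [C CF zC]; exists C; rewrite in_filt CF zC.
Qed.

Lemma dA F x C0 z : setup F x C0 -> z.1 != x.1 -> z \notin C0 ->
  ldeg (DP x.1 F) z = ldeg F z.
Proof.
move=> su zx zC0; rewrite (ldeg_DP su zx) /ldeg.
congr (#|` _|); apply/fsetP => D; rewrite !in_filt in_fsetD1 (negbTE zC0) andbF orbF.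
case: (eqVneq D C0) => [->|] /=; last by [].
by rewrite (negbTE zC0) andbF.
Qed.

Lemma dB F x C0 z : setup F x C0 -> z.1 != x.1 -> z \in C0 ->
  (ldeg F (comp x) <= ldeg (DP x.1 F) z)%N.
Proof.
move=> su zx zC0; have [mu C0F xC0 uniq] := su.
have cxC0 : comp x \notin C0 by apply: MU_ok mu C0F xC0.
rewrite (ldeg_DP su zx) /ldeg; apply: fsubset_leq_card; apply/fsubsetP => D.
rewrite !in_filt in_fsetD1 => /andP [DF cxD]; apply/andP; split.
  by rewrite DF andbT; apply/eqP => e; rewrite -e cxD in cxC0.
by rewrite cxD zC0 orbT.
Qed.

Lemma dC F x C0 z : setup F x C0 -> z.1 != x.1 -> z \in C0 ->
  (forall D, D \in F -> z \in D -> D = C0) ->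
  ldeg (DP x.1 F) z = ldeg F (comp x).
Proof.
move=> su zx zC0 zu; have [mu C0F xC0 uniq] := su.
have cxC0 : comp x \notin C0 by apply: MU_ok mu C0F xC0.
rewrite (ldeg_DP su zx) /ldeg; congr (#|` _|); apply/fsetP => D.
rewrite !in_filt in_fsetD1 zC0 andbT.
case: (eqVneq D C0) => [->|DC0] /=; first by rewrite (negbTE cxC0) andbF.
case DF: (D \in F) => //=; case zD: (z \in D) => //=.
by rewrite (zu D DF zD) eqxx in DC0.
Qed.

Lemma dpos F x C0 z : setup F x C0 -> (0 < ldeg F (comp x))%N -> z.1 != x.1 ->
  (0 < ldeg F z)%N -> (0 < ldeg (DP x.1 F) z)%N.
Proof.
move=> su cx zx zp.
case zC0: (z \in C0); first by apply: leq_trans cx (dB su zx zC0).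
by rewrite (dA su zx (negbT zC0)).
Qed.

Lemma singularE F z :
  singular F z.1 <-> minn (ldeg F z) (ldeg F (comp z)) = 1.
Proof. by case: z => u [] /=; rewrite /singular /pos /neg /comp //= minnC. Qed.

Lemma one_singularE F z :
  one_singular F z.1 <-> ldeg F z = 1 /\ ldeg F (comp z) = 1.
Proof.
case: z => u [] /=; rewrite /one_singular /pos /neg /comp //=.
by split => -[]; split.
Qed.

Lemma Sat2 H a b E : saturated H -> a.1 != b.1 ->
  (forall Z, Z \in H -> b \in Z -> a \in Z) -> (exists2 Z, Z \in H & b \in Z) ->
  E \in H -> comp b \in E -> a \notin E -> False.
Proof.
move=> [mu satd] ab Hab [Z0 Z0H bZ0] EH cbE aE.
have [ok [uns _]] := mu.
have : exists f, (forall C, C \in H -> C != E -> satC f C) /\ ~ satC f E /\ sat_lit f a.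
  case caE: (comp a \in E).
    have [f [s n]] := MU_drop mu EH; exists f; split => //; split => //.
    apply/negPn/negP => na; apply: n; exists (comp a) => //; by rewrite sat_comp.
  have naE : a.1 \notin varC E.
    apply/negP => /varCP [l lE el]; case: (lit_eq1 (esym el)) => e.
      by rewrite -e lE in aE.
    by rewrite -e lE in caE.
  have aH : a.1 \in varF H.
    apply/bigfcupP; exists Z0; first by rewrite Z0H.
    exact: mem_varC (Hab _ Z0H bZ0).
  have [f sf] := satd E a EH aH naE.
  have s : forall C, C \in H -> C != E -> satC f C.
    by move=> C CH CE; apply: sf; rewrite in_fsetU in_fsetD1 CE CH.
  have n : ~ satC f E.
    move=> sE; apply: uns; exists f => C CH.
    case: (eqVneq C E) => [->|CE]; [exact: sE|exact: s].
  exists f; split => //; split => //.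
  have Ea : E `|` [fset a] \in (H `\ E) `|` [fset E `|` [fset a]].
    by rewrite in_fsetU in_fset1 eqxx orbT.
  have [l] := sf _ Ea.
  rewrite in_fsetU in_fset1 => /orP [lE sl|/eqP -> //].
  by exfalso; apply: n; exists l.
move=> [f [s [n sa]]].
apply: uns; exists (upd f b.1 (~~ b.2)) => C CH.
case cbC: (comp b \in C).
  by exists (comp b) => //; rewrite sat_upd /= eqxx.
case: (eqVneq C E) => [e|CE]; first by rewrite e cbE in cbC.
have [l lC sl] := s C CH CE.
case: (eqVneq l b) => [elb|lb].
  exists a; first by apply: Hab => //; rewrite -elb.
  by rewrite sat_upd (negbTE ab).
exists l => //; rewrite sat_upd.
have lcb : l != comp b by apply/eqP => e; rewrite -e lC in cbC.
by rewrite (negbTE (neq_var_lit lb lcb)).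
Qed.

Lemma singind1 F : singind_eq F 1 -> exists v, singular F v /\ nonsingular (DP v F).
Proof.
move=> [[vs [[st ns] sz]] _].
case: vs st ns sz => [|v [|? ?]] //= st ns _.
by exists v; split => //; apply: (st 0).
Qed.

Lemma sing_lit F v : singular F v ->
  exists x, [/\ x.1 = v, ldeg F x = 1 & (0 < ldeg F (comp x))%N].
Proof.
rewrite /singular => h.
have [[h1 h2]|[h1 h2]] : (ldeg F (pos v) = 1 /\ (0 < ldeg F (neg v))%N) \/
  (ldeg F (neg v) = 1 /\ (0 < ldeg F (pos v))%N) by lia.
  by exists (pos v).
by exists (neg v).
Qed.

Lemma uniq1 (F : clauseset) y C : ldeg F y = 1 -> C \in F -> y \in C ->
  forall D, D \in F -> y \in D -> D = C.
Proof.
move=> /eqP /cardfs1P [C0 E] CF yC D DF yD.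
have : C \in [fset C in F | y \in C] by rewrite in_filt CF yC.
have : D \in [fset C in F | y \in C] by rewrite in_filt DF yD.
by rewrite E !in_fset1 => /eqP -> /eqP ->.
Qed.

Lemma sing_in_C0 F x C0 y : setup F x C0 -> nonsingular (DP x.1 F) ->
  (0 < ldeg F (comp x))%N -> y.1 != x.1 -> ldeg F y = 1 ->
  (0 < ldeg F (comp y))%N -> y \in C0.
Proof.
move=> su ns cx yx y1 cy; apply/negPn/negP => yC0.
apply: (ns y.1); apply/singularE.
rewrite (dA su yx yC0) y1.
have := dpos su cx (yx : (comp y).1 != x.1) cy; lia.
Qed.

Lemma partA F x C0 : setup F x C0 -> nonsingular (DP x.1 F) ->
  (0 < ldeg F (comp x))%N -> (exists2 w, w != x.1 & singular F w) ->
  forall u, singular F u -> ~ one_singular F u.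
Proof.
move=> su ns cx [w wx sw] u su' os.
have [mu C0F xC0 uniq] := su.
case: (eqVneq u x.1) => [eu|ux].
  move: os; rewrite eu => /one_singularE [x1 cx1].
  have [y [yw y1 cy]] := sing_lit sw.
  have yx : y.1 != x.1 by rewrite yw.
  apply: (ns w); rewrite -yw; apply/singularE.
  have h1 : ldeg (DP x.1 F) y = 1.
    case yC0: (y \in C0).
      by rewrite (dC su yx yC0 (uniq1 y1 C0F yC0)) cx1.
    by rewrite (dA su yx (negbT yC0)) y1.
  have := dpos su cx (yx : (comp y).1 != x.1) cy; lia.
have [z1 cz1] := proj1 (one_singularE F (pos u)) os.
have zx : (pos u).1 != x.1 := ux.
have czx : (comp (pos u)).1 != x.1 := ux.
apply: (ns u); apply/(singularE (DP x.1 F) (pos u)).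
have p1 : (0 < ldeg (DP x.1 F) (pos u))%N by apply: dpos su cx zx _; rewrite z1.
have p2 : (0 < ldeg (DP x.1 F) (comp (pos u)))%N by apply: dpos su cx czx _; rewrite cz1.
case zC0: (pos u \in C0).
  have czC0 : comp (pos u) \notin C0 by apply: MU_ok mu C0F zC0.
  rewrite (dA su czx czC0) cz1; lia.
rewrite (dA su zx (negbT zC0)) z1; lia.
Qed.

Lemma setup_ldeg F x C0 : setup F x C0 -> ldeg F x = 1.
Proof.
move=> [mu C0F xC0 uniq]; rewrite /ldeg -(cardfs1 C0); congr (#|` _|).
apply/fsetP => C; rewrite in_filt in_fset1.
apply/andP/eqP => [[CF xC]|->]; [exact: uniq|by []].
Qed.

Lemma setup_sing F x C0 : setup F x C0 -> (0 < ldeg F (comp x))%N -> singular F x.1.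
Proof. by move=> su cx; apply/singularE; rewrite (setup_ldeg su); lia. Qed.

Lemma partB F x C0 : setup F x C0 -> nonsingular (DP x.1 F) ->
  (0 < ldeg F (comp x))%N -> (exists2 w, w != x.1 & singular F w) ->
  forall y, singular_lit F y -> y \in C0.
Proof.
move=> su ns cx ex y [sy y1].
have [mu C0F xC0 uniq] := su.
have cy : (0 < ldeg F (comp y))%N by move: sy => /singularE; rewrite y1; lia.
case: (eqVneq y.1 x.1) => [e|yx]; last exact: sing_in_C0 su ns cx yx y1 cy.
case: (lit_eq1 (esym e)) => ey; first by rewrite ey.
exfalso; apply: (partA su ns cx ex sy); rewrite e.
by apply/one_singularE; rewrite (setup_ldeg su) -ey y1.
Qed.

Lemma memH F x C0 D : setup F x C0 -> D \in F -> D != C0 ->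
  rho x C0 D \in DP x.1 F.
Proof.
by move=> su DF DC0; rewrite (DPchar su); apply/imfsetP; exists D => //=; rewrite in_fsetD1 DC0 DF.
Qed.

Lemma inH F x C0 Z : setup F x C0 -> Z \in DP x.1 F ->
  exists D, [/\ D \in F, D != C0 & Z = rho x C0 D].
Proof.
move=> su; rewrite (DPchar su) => /imfsetP [D /=]; rewrite in_fsetD1 => /andP [DC0 DF] ->.
by exists D.
Qed.

Lemma H_in_sDP F x C0 : setup F x C0 -> nonsingular (DP x.1 F) ->
  (0 < ldeg F (comp x))%N -> in_sDP F (DP x.1 F).
Proof.
move=> su ns cx; split; last by split => //; exact: MU_DP su.
apply: sDP_step; [exact: sDP_refl|exact: setup_sing su cx].
Qed.

Lemma sat_app F x C0 y z : setup F x C0 -> saturated (DP x.1 F) ->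
  (0 < ldeg F (comp x))%N -> y.1 != x.1 -> z.1 != x.1 -> y.1 != z.1 ->
  y \in C0 -> z \in C0 -> ldeg F z = 1 ->
  forall E, E \in F -> comp z \in E -> y \notin E -> False.
Proof.
move=> su sat cx yx zx yz yC0 zC0 z1 E EF czE yE.
have [mu C0F xC0 uniq] := su.
have EC0 : E != C0.
  by apply/eqP => e; move: (MU_ok mu C0F zC0); rewrite -e czE.
have cxE : comp x \notin E.
  apply/negP => cxE; have := K1 su EF cxE zC0 czE => e.
  by move: zx; rewrite e eqxx.
have H1 : forall Z, Z \in DP x.1 F -> z \in Z -> y \in Z.
  move=> Z ZH zZ; have [D [DF DC0 EZ]] := inH su ZH.
  move: zZ; rewrite EZ !rho_mem // => /orP [zD|/andP [cxD _]].
    by rewrite (uniq1 z1 C0F zC0 DF zD) eqxx in DC0.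
  by rewrite cxD yC0 orbT.
have H2 : exists2 Z, Z \in DP x.1 F & z \in Z.
  have : (0 < ldeg (DP x.1 F) z)%N by apply: dpos su cx zx _; rewrite z1.
  by move/ldeg_posP.
apply: (Sat2 sat yz H1 H2 (memH su EF EC0)); rewrite /rho (negbTE cxE) //.
Qed.

Lemma partC F x C0 : setup F x C0 -> nonsingular (DP x.1 F) ->
  (0 < ldeg F (comp x))%N -> eventually_saturated F ->
  forall w, w != x.1 -> singular F w ->
  forall u, singular F u -> u = x.1 \/ u = w.
Proof.
move=> su ns cx es w wx sw u su'.
have [mu C0F xC0 uniq] := su.
case: (eqVneq u x.1) => [->|ux]; first by left.
case: (eqVneq u w) => [->|uw]; first by right.
exfalso.
have [y [yw y1 cy]] := sing_lit sw.
have [z [zu z1 cz]] := sing_lit su'.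
have yx : y.1 != x.1 by rewrite yw.
have zx : z.1 != x.1 by rewrite zu.
have yC0 := sing_in_C0 su ns cx yx y1 cy.
have zC0 := sing_in_C0 su ns cx zx z1 cz.
have sat := es _ (H_in_sDP su ns cx).
have /ldeg_posP [E EF czE] := cz.
have yz : y.1 != z.1 by rewrite yw zu eq_sym.
apply: (sat_app su sat cx yx zx yz yC0 zC0 z1 EF czE).
apply/negP => yE; have e := uniq1 y1 C0F yC0 EF yE.
by move: (MU_ok mu C0F zC0); rewrite -e czE.
Qed.

Lemma reach_nonsing X G : nonsingular X -> sDP_reach X G -> G = X.
Proof. by move=> ns; elim => [//|G' v R IH sv]; exfalso; rewrite IH in sv; exact: ns sv. Qed.

Lemma reach_split F G (P : nat -> Prop) : (forall u, singular F u -> P u) ->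
  sDP_reach F G -> G = F \/ exists u, P u /\ sDP_reach (DP u F) G.
Proof.
move=> hP; elim => [|G' v R IH sv]; first by left.
case: IH => [e|[u [Pu R']]].
  by right; exists v; rewrite e; rewrite e in sv; split; [exact: hP|exact: sDP_refl].
by right; exists u; split => //; exact: sDP_step R' sv.
Qed.

Lemma iso_refl G : isomorphic G G.
Proof.
exists id; split; first by exists id.
split => // .
rewrite -[RHS]imfset_id; apply: eq_imfset => // C /=; exact: imfset_id.
Qed.

Lemma Hw_ns F x y C0 : setup F x C0 -> setup F y C0 -> x.1 != y.1 ->
  nonsingular (DP x.1 F) -> (1 < ldeg F (comp x))%N -> (1 < ldeg F (comp y))%N ->
  nonsingular (DP y.1 F).
Proof.
move=> sux suy xy ns cx cy u su'.
have [mu C0F xC0 _] := sux.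
have [_ _ yC0 _] := suy.
have yx : y.1 != x.1 by rewrite eq_sym.
case: (eqVneq u y.1) => [eu|uy].
  move: su'; rewrite eu => /singularE.
  by rewrite !(ldeg_DP0 suy) //.
case: (eqVneq u x.1) => [eu|ux].
  move: su'; rewrite eu => /singularE.
  have := dB suy xy xC0.
  have cxC0 : comp x \notin C0 by apply: MU_ok mu C0F xC0.
  rewrite (dA suy (xy : (comp x).1 != y.1) cxC0); lia.
have L : forall t, t.1 = u -> comp t \notin C0 -> False.
  move=> t tu ctC0.
  have ty : t.1 != y.1 by rewrite tu.
  have tx : t.1 != x.1 by rewrite tu.
  apply: (ns u); rewrite -tu; apply/singularE.
  move: su'; rewrite -tu => /singularE.
  rewrite (dA suy (ty : (comp t).1 != y.1) ctC0) (dA sux (tx : (comp t).1 != x.1) ctC0).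
  case tC0: (t \in C0).
    have := dB suy ty tC0; have := dB sux tx tC0; lia.
  by rewrite (dA suy ty (negbT tC0)) (dA sux tx (negbT tC0)).
case czC0: (comp (pos u) \in C0).
  apply: (L (comp (pos u))) => //; rewrite compK.
  by rewrite -[pos u]compK; apply: MU_ok mu C0F czC0.
by apply: (L (pos u)) => //; rewrite czC0.
Qed.

Lemma contain F x y C0 : setup F x C0 -> setup F y C0 -> x.1 != y.1 ->
  saturated (DP x.1 F) -> (0 < ldeg F (comp x))%N ->
  forall E, E \in F -> comp y \in E ->
  forall a, a \in C0 -> a != x -> a != y -> a \in E.
Proof.
move=> sux suy xy sat cx E EF cyE a aC0 ax ay.
have [mu C0F xC0 _] := sux.
have [_ _ yC0 _] := suy.
have acx : a != comp x by apply/eqP => e; move: (MU_ok mu C0F xC0); rewrite -e aC0.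
have acy : a != comp y by apply/eqP => e; move: (MU_ok mu C0F yC0); rewrite -e aC0.
apply/negPn/negP => aE.
apply: (sat_app sux sat cx (neq_var_lit ax acx) _ (neq_var_lit ay acy) aC0 yC0
          (setup_ldeg suy) EF cyE aE).
by rewrite eq_sym.
Qed.

Definition phi (x y l : lit) : lit :=
  if l.1 == x.1 then (y.1, l.2 (+) x.2 (+) ~~ y.2)
  else if l.1 == y.1 then (x.1, l.2 (+) y.2 (+) ~~ x.2) else l.

Lemma phiK x y : x.1 != y.1 -> cancel (phi x y) (phi x y).
Proof.
case: x y => vx bx [vy bY] /= xy [u b]; rewrite /phi /=.
case: (eqVneq u vx) => [->|ux] /=.
  rewrite eq_sym (negbTE xy) eqxx /=; congr pair.
  by case: b; case: bx; case: bY.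
case: (eqVneq u vy) => [->|uy] /=; last by rewrite (negbTE ux) (negbTE uy).
rewrite eqxx /=; congr pair; by case: b; case: bx; case: bY.
Qed.

Lemma phiC x y l : phi x y (comp l) = comp (phi x y l).
Proof.
case: l => u b; rewrite /phi /comp /=.
case: (u == x.1) => /=; first by rewrite -!addNb.
case: (u == y.1) => //=; by rewrite -!addNb.
Qed.

Lemma phi_sym x y : x.1 != y.1 -> phi x y =1 phi y x.
Proof.
move=> xy [u b]; rewrite /phi /=.
case: (eqVneq u x.1) => [->|ux]; first by rewrite (negbTE xy).
by [].
Qed.

Lemma phi_id x y l : l.1 != x.1 -> l.1 != y.1 -> phi x y l = l.
Proof. by move=> lx ly; rewrite /phi (negbTE lx) (negbTE ly). Qed.

Lemma phi_x x y : phi x y x = comp y.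
Proof.
case: x y => vx bx [vy bY]; rewrite /phi /comp /= eqxx /=; congr pair.
by case: bx; case: bY.
Qed.

Lemma phi_y x y : x.1 != y.1 -> phi x y y = comp x.
Proof.
case: x y => vx bx [vy bY] /= xy; rewrite /phi /comp /= eq_sym (negbTE xy) eqxx /=.
by congr pair; case: bx; case: bY.
Qed.

Lemma phi_cx x y : phi x y (comp x) = y.
Proof. by rewrite phiC phi_x compK. Qed.

Lemma phi_cy x y : x.1 != y.1 -> phi x y (comp y) = x.
Proof. by move=> xy; rewrite phiC phi_y // compK. Qed.

Lemma in_phi x y (S : clause) l : x.1 != y.1 ->
  (l \in phi x y @` S) = (phi x y l \in S).
Proof.
move=> xy; apply/imfsetP/idP => [[l' l'S ->]|h]; first by rewrite phiK.
by exists (phi x y l) => //; rewrite phiK.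
Qed.

Lemma phi_phi_set x y (S : clause) : x.1 != y.1 -> phi x y @` (phi x y @` S) = S.
Proof. by move=> xy; apply/fsetP => l; rewrite !in_phi // phiK. Qed.

Lemma phi_res F x y C0 D : setup F x C0 -> setup F y C0 -> x.1 != y.1 ->
  D \in F -> D != C0 -> comp x \in D ->
  (forall a, a \in C0 -> a != x -> a != y -> a \in D) ->
  phi x y @` (rho x C0 D) = rho y C0 D.
Proof.
move=> sux suy xy DF DC0 cxD cont.
have [mu C0F xC0 uniqx] := sux.
have [_ _ yC0 uniqy] := suy.
have yx : y.1 != x.1 by rewrite eq_sym.
have cyD : comp y \notin D.
  apply/negP => cyD; have e := K1 sux DF cxD yC0 cyD.
  by move: xy; rewrite -e eqxx.
have yD : y \notin D.
  by apply/negP => yD; rewrite (uniqy D DF yD) eqxx in DC0.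
have xD : x \notin D by rewrite -[x]compK; apply: MU_ok mu DF cxD.
have cyC0 : comp y \notin C0 by apply: MU_ok mu C0F yC0.
have [yx1 yx2] := var_lit_neq yx.
have [xy1 xy2] := var_lit_neq xy.
rewrite /rho cxD (negbTE cyD); apply/fsetP => l; rewrite in_phi // in_res.
case: (eqVneq l.1 x.1) => [lx|lx].
  case: (lit_eq1 (esym lx)) => ->.
    by rewrite phi_x (negbTE xD) (negbTE cyC0) (negbTE cyD) /= !andbF.
  by rewrite phi_cx cxD yC0 yx1 yx2.
case: (eqVneq l.1 y.1) => [ly|ly].
  case: (lit_eq1 (esym ly)) => ->.
    by rewrite (phi_y xy) eqxx /= andbF (negbTE yD).
  by rewrite (phi_cy xy) eqxx /= (negbTE cyD).
rewrite phi_id //; have [l1 l2] := var_lit_neq lx; have [l3 _] := var_lit_neq ly.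
rewrite l1 l2 /=; case lC0: (l \in C0) => //=.
by rewrite cont.
Qed.

Definition contP (F : clauseset) x y (C0 : clause) := forall D, D \in F -> comp x \in D ->
  forall a, a \in C0 -> a != x -> a != y -> a \in D.

Lemma phi_rho F x y C0 D : setup F x C0 -> setup F y C0 -> x.1 != y.1 ->
  contP F x y C0 -> contP F y x C0 -> D \in F -> D != C0 ->
  phi x y @` (rho x C0 D) = rho y C0 D.
Proof.
move=> sux suy xy cX cY DF DC0.
have yx : y.1 != x.1 by rewrite eq_sym.
have [mu C0F xC0 uniqx] := sux.
have [_ _ yC0 uniqy] := suy.
case cxD: (comp x \in D).
  by apply: (phi_res sux suy xy DF DC0 cxD) => a aC0 ax ay; apply: cX.
case cyD: (comp y \in D).
  have h := phi_res suy sux yx DF DC0 cyD (fun a aC0 ay ax => cY D DF cyD a aC0 ay ax).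
  rewrite -h.
  have -> : phi y x @` rho y C0 D = phi x y @` rho y C0 D.
    by apply: eq_imfset => //; exact: phi_sym yx.
  exact: phi_phi_set.
rewrite /rho cxD cyD.
have hv : forall l, l \in D -> phi x y l = l.
  move=> l lD; apply: phi_id.
    apply/negP => /eqP e; case: (lit_eq1 (esym e)) => el.
      by rewrite el in lD; rewrite (uniqx D DF lD) eqxx in DC0.
    by move: lD; rewrite el cxD.
  apply/negP => /eqP e; case: (lit_eq1 (esym e)) => el.
    by rewrite el in lD; rewrite (uniqy D DF lD) eqxx in DC0.
  by move: lD; rewrite el cyD.
apply/fsetP => l; rewrite in_phi //; apply/idP/idP => h.
  by have := hv _ h; rewrite phiK // => ->.
by rewrite hv.
Qed.

Lemma iso_xy F x y C0 : setup F x C0 -> setup F y C0 -> x.1 != y.1 ->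
  contP F x y C0 -> contP F y x C0 ->
  isomorphic (DP x.1 F) (DP y.1 F) /\ isomorphic (DP y.1 F) (DP x.1 F).
Proof.
move=> sux suy xy cX cY.
have bij : bijective (phi x y) by exists (phi x y); exact: phiK.
split; exists (phi x y); split => //; split => //; first exact: phiC.
  rewrite (DPchar sux) (DPchar suy) -imfset_comp; apply: eq_in_imfset => D.
  rewrite in_fsetD1 => /andP [DC0 DF] /=.
  exact: (phi_rho sux suy xy cX cY DF DC0).
  exact: phiC.
rewrite (DPchar sux) (DPchar suy) -imfset_comp; apply: eq_in_imfset => D.
rewrite in_fsetD1 => /andP [DC0 DF] /=.
by rewrite -(phi_rho sux suy xy cX cY DF DC0) phi_phi_set.
Qed.

Unset Implicit Arguments.

Theorem corollary69 (F : clauseset) :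
  MU F -> singind_eq F 1 ->
  ((exists v w, v <> w /\ singular F v /\ singular F w) ->
     (forall v, singular F v -> non_one_singular F v) /\
     (exists2 C, C \in F & forall x, singular_lit F x -> x \in C) /\
     (eventually_saturated F ->
        exists v w, [/\ v <> w, singular F v, singular F w &
                        forall u, singular F u -> u = v \/ u = w]))
  /\
  (eventually_saturated F ->
     forall G1 G2, in_sDP F G1 -> in_sDP F G2 -> isomorphic G1 G2).
Proof.
move=> mu si.
have [v [sv ns]] := singind1 si.
have [x [xv x1 cx]] := sing_lit sv.
have [C0 su] := setup_of mu x1.
subst v.
have [_ C0F xC0 uniq] := su.
have sx : singular F x.1 := setup_sing su cx.
split.
  move=> [v' [w' [vw [sv' sw']]]].
  have ex : exists2 w, w != x.1 & singular F w.
    case: (eqVneq v' x.1) => [e|ne]; last by exists v'.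
    exists w' => //; apply/eqP => e'; apply: vw; by rewrite e e'.
  have pA := partA su ns cx ex.
  split; first by move=> u su'; split => //; exact: pA.
  split; first by exists C0 => //; exact: (partB su ns cx ex).
  move=> es; case: ex => w wx sw.
  exists x.1, w; split => //; first by apply/eqP; rewrite eq_sym.
  exact: (partC su ns cx es wx sw).
move=> es G1 G2 [R1 [ns1 _]] [R2 [ns2 _]].
case: (classic (exists2 w, w != x.1 & singular F w)) => [[w wx sw]|nw].
  have Pu := partC su ns cx es wx sw.
  have [y [yw y1 cy]] := sing_lit sw.
  subst w.
  have yx : y.1 != x.1 := wx.
  have xy : x.1 != y.1 by rewrite eq_sym.
  have ex : exists2 w, w != x.1 & singular F w by exists y.1.
  have yC0 := sing_in_C0 su ns cx yx y1 cy.
  have suy : setup F y C0 by split => //; exact: uniq1 y1 C0F yC0.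
  have pA := partA su ns cx ex.
  have cx2 : (1 < ldeg F (comp x))%N.
    have := pA _ sx; rewrite one_singularE x1 => h.
    have : ldeg F (comp x) <> 1 by move=> e; apply: h.
    lia.
  have cy2 : (1 < ldeg F (comp y))%N.
    have := pA _ sw; rewrite one_singularE y1 => h.
    have : ldeg F (comp y) <> 1 by move=> e; apply: h.
    lia.
  have nsw := Hw_ns su suy xy ns cx2 cy2.
  have satx := es _ (H_in_sDP su ns cx).
  have saty := es _ (H_in_sDP suy nsw (ltnW cy2)).
  have cX : contP F x y C0.
    move=> D DF cxD a aC0 ax ay; exact: (contain suy su yx saty (ltnW cy2) DF cxD aC0 ay ax).
  have cY : contP F y x C0.
    move=> D DF cyD a aC0 ay ax; exact: (contain su suy xy satx cx DF cyD aC0 ax ay).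
  have [i1 i2] := iso_xy su suy xy cX cY.
  have fin : forall G, sDP_reach F G -> nonsingular G -> G = DP x.1 F \/ G = DP y.1 F.
    move=> G R nsG.
    case: (reach_split (P := fun u => u = x.1 \/ u = y.1) Pu R) => [e|[u [[->|->] R']]].
    - by exfalso; rewrite e in nsG; exact: nsG _ sx.
    - by left; exact: reach_nonsing ns R'.
    - by right; exact: reach_nonsing nsw R'.
  by case: (fin _ R1 ns1) => ->; case: (fin _ R2 ns2) => ->; auto using iso_refl.
have Pu : forall u, singular F u -> u = x.1.
  move=> u su'; apply/eqP/negPn/negP => h; apply: nw; by exists u.
have fin : forall G, sDP_reach F G -> nonsingular G -> G = DP x.1 F.
  move=> G R nsG; case: (reach_split Pu R) => [e|[u [-> R']]].
    by exfalso; rewrite e in nsG; exact: nsG _ sx.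
  exact: reach_nonsing ns R'.
by rewrite (fin _ R1 ns1) (fin _ R2 ns2); exact: iso_refl.
Qed.
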